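(* Let $A_3^*$ be the set of nonnegative integers whose base-$3$ expansion contains no digit $2$, and let $G_3^*$ be the set of positive integers $k$ such that $v_p(k) \in A_3^*$ for every prime $p$ dividing $k$. Then the upper uniform density of $G_3^*$ equals its asymptotic density: $\overline{u}(G_3^* ) = d(G_3^* )$.
   Context: $G_3^*$ is (by Rankin's characterization) the greedy set of positive integers free of 3-term geometric progressions. For $A\subseteq\mathbb{N}$: the asymptotic density is $d(A)=\lim_{N\to\infty}\frac{|A\cap\{1,\dots,N\}|}{N}$ when it exists (for $G_3^*$ it exists and equals $\prod_p (1-\frac1p)\sum_{i\in A_3^*} p^{-i}$); the upper uniform density is $\overline{u}(A) = \lim_{s\to\infty} \max_{n\ge 0} \frac{1}{s}\,\#\{a\in A : n < a \le n+s\}$. *)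

(* Defs.v *)
From HB Require Import structures.
From mathcomp Require Import all_boot all_order all_algebra.
From mathcomp Require Import all_classical all_reals all_analysis.
Set Implicit Arguments. Unset Strict Implicit. Unset Printing Implicit Defensive.
Import Order.TTheory GRing.Theory Num.Theory.
Local Open Scope classical_set_scope.
Local Open Scope ring_scope.

Definition A3star : set nat :=
  [set n | forall k : nat, ((n %/ 3 ^ k) %% 3 != 2)%N].

Definition G3star : set nat :=
  [set k | (0 < k)%N /\ forall p : nat, prime p -> (p %| k)%N -> A3star (logn p k)].

Definition window_count (R : realType) (A : set nat) (m s : nat) : R :=
  \sum_(m.+1 <= a < (m + s).+1) ((a \in A : bool)%:R : R).

Definition density_seq (R : realType) (A : set nat) (N : nat) : R :=
  window_count R A 0 N / N%:R.

Definition uniform_seq (R : realType) (A : set nat) (s : nat) : R :=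
  sup [set window_count R A m s / s%:R | m in [set: nat]].

(* Main.v *)
Require Import Defs.
From HB Require Import structures.
From mathcomp Require Import all_boot all_order all_algebra.
From mathcomp Require Import all_classical all_reals all_analysis.
From mathcomp Require Import ring lra zify.
Import Order.TTheory GRing.Theory Num.Theory.
Import numFieldTopology.Exports numFieldNormedType.Exports.
Local Open Scope classical_set_scope.

Definition cntN (A : set nat) (m s : nat) : nat :=
  (\sum_(m.+1 <= a < (m + s).+1) nat_of_bool (a \in A))%N.

Lemma cntN_split A m s t : cntN A m (s + t) = cntN A m s + cntN A (m + s) t.
Proof.
rewrite /cntN addnA (big_cat_nat _ (n:=(m+s).+1)) //.
  by rewrite ltnS leq_addr.
by rewrite ltnS leq_addr.
Qed.

Lemma cntN1 A m : cntN A m 1 = nat_of_bool (m.+1 \in A).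
Proof. by rewrite /cntN addn1 big_nat1. Qed.

Lemma cntN_le A m s : cntN A m s <= s.
Proof.
rewrite /cntN; apply: (@leq_trans (\sum_(m.+1 <= a < (m + s).+1) 1)).
  by apply: leq_sum => i _; apply: leq_b1.
by rewrite sum_nat_const_nat subSS addKn muln1.
Qed.

Lemma cntN_mono (A B : set nat) m s : (forall k, 0 < k -> A k -> B k) ->
  cntN A m s <= cntN B m s.
Proof.
move=> AB; rewrite /cntN big_nat_cond [X in _ <= X]big_nat_cond.
apply: leq_sum => i /andP[/andP[hi _] _].
case: (boolP (i \in A)) => // /set_mem/(AB i (leq_trans (ltn0Sn _) hi))/mem_set ->.
by [].
Qed.

Section Periodic.
Variables (H : set nat) (M : nat).
Hypothesis M0 : 0 < M.
Hypothesis hper : forall k, (k + M \in H) = (k \in H).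

Lemma cntN_shift m : cntN H m M = cntN H 0 M.
Proof.
elim: m => // m IH.
have e : cntN H m (M + 1) = cntN H m (1 + M) by rewrite addnC.
rewrite !cntN_split !cntN1 -addSn hper addn1 in e.
lia.
Qed.

Lemma cntN_mult q m : cntN H m (q * M) = q * cntN H 0 M.
Proof.
elim: q m => [|q IH] m; first by rewrite mul0n /cntN addn0 big_geq.
by rewrite mulSn cntN_split IH cntN_shift mulSn.
Qed.

Lemma cntN_upper m s : cntN H m s <= (s %/ M) * cntN H 0 M + M.
Proof.
rewrite {1}(divn_eq s M) cntN_split cntN_mult leq_add2l.
exact: leq_trans (cntN_le _ _ _) (ltnW (ltn_pmod _ M0)).
Qed.

Lemma cntN_lower N : (N %/ M) * cntN H 0 M <= cntN H 0 N.
Proof. by rewrite {2}(divn_eq N M) cntN_split cntN_mult leq_addr. Qed.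
End Periodic.

Lemma term_le_sum (F : nat -> nat) a b i : a <= i < b ->
  F i <= \sum_(a <= j < b) F j.
Proof.
case/andP=> ai ib; rewrite (big_cat_nat _ (n:=i)) //=; last exact: ltnW.
by rewrite [X in _ + X]big_ltn // addnCA leq_addr.
Qed.

Lemma cnt_div d N : 0 < d -> \sum_(1 <= k < N.+1) nat_of_bool (d %| k) = N %/ d.
Proof.
move=> d0; elim: N => [|N IH]; first by rewrite big_geq // div0n.
by rewrite big_nat_recr //= IH divnS // addnC.
Qed.

Definition Hs (y E : nat) : set nat :=
  [set k | forall p, prime p -> p <= y -> (p ^ E %| k) \/ A3star (logn p k)].
Definition D1 (y E : nat) : set nat :=
  [set k | exists p, [/\ prime p, p <= y & p ^ E %| k]].
Definition D2 (y : nat) : set nat := [set k | exists n, y < n /\ n ^ 2 %| k].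

Lemma A3_small n : n <= 1 -> A3star n.
Proof.
move=> n1 k; have h : n %/ 3 ^ k %% 3 <= 1.
  exact: leq_trans (leq_mod _ _) (leq_trans (leq_div _ _) n1).
by apply/eqP => e; rewrite e in h.
Qed.

Lemma G_sub_H y E k : 0 < k -> G3star k -> Hs y E k.
Proof.
move=> _ [k0 hG] p pp _; right; case: (boolP (p %| k)) => pk; first exact: hG.
by apply: A3_small; rewrite lognE (negbTE pk) !andbF.
Qed.

Lemma H_cover y E k : 0 < k -> Hs y E k -> [\/ G3star k, D1 y E k | D2 y k].
Proof.
move=> k0 hH.
case: (pselect (exists p, prime p /\ ~ A3star (logn p k))) => [[p [pp nA]]|hn].
  have l2 : 1 < logn p k by rewrite ltnNge; apply/negP => /A3_small.
  case: (leqP p y) => py.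
    case: (hH p pp py) => // hd; apply: Or32; by exists p.
  apply: Or33; exists p; split => //; by rewrite pfactor_dvdn.
apply: Or31; split => // p pp _; apply: contrapT => nA; apply: hn; by exists p.
Qed.

Lemma logn_shift p E k M : prime p -> p ^ E %| M -> ~~ (p ^ E %| k) ->
  logn p (k + M) = logn p k.
Proof.
move=> pp hM hk.
have k0 : 0 < k by case: k hk => //; rewrite dvdn0.
have kM0 : 0 < k + M by rewrite addn_gt0 k0.
set e := logn p k.
have eE : e < E by rewrite ltnNge -pfactor_dvdn.
apply/eqP; rewrite eqn_leq; apply/andP; split.
  rewrite -ltnS ltnNge -pfactor_dvdn // dvdn_addl.
    by rewrite pfactor_dvdn // ltnn.
  exact: dvdn_trans (dvdn_exp2l p eE) hM.
rewrite -pfactor_dvdn //; apply: dvdn_add; first by rewrite pfactor_dvdn.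
exact: dvdn_trans (dvdn_exp2l p (ltnW eE)) hM.
Qed.

Lemma Hs_per y E k : (k + (y`!) ^ E \in Hs y E) = (k \in Hs y E).
Proof.
have key : forall p, prime p -> p <= y ->
   ((p ^ E %| k + (y`!)^E) \/ A3star (logn p (k + (y`!)^E))) <->
   ((p ^ E %| k) \/ A3star (logn p k)).
  move=> p pp py.
  have hM : p ^ E %| (y`!) ^ E.
    by apply: dvdn_exp2r; apply: dvdn_fact; rewrite prime_gt0.
  rewrite dvdn_addl //.
  case: (boolP (p ^ E %| k)) => hk; first by split; left.
  by rewrite (logn_shift p E k _ pp hM hk).
apply/idP/idP => /set_mem h; apply/mem_set => p pp py.
  exact: (proj1 (key p pp py) (h p pp py)).
exact: (proj2 (key p pp py) (h p pp py)).
Qed.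

Lemma cnt_D1 y E N : cntN (D1 y E) 0 N <= y.+1 * (N %/ 2 ^ E).
Proof.
rewrite /cntN add0n.
apply: (@leq_trans (\sum_(1 <= k < N.+1) \sum_(0 <= p < y.+1)
            nat_of_bool (prime p && (p ^ E %| k)))).
  apply: leq_sum => k _; case: (boolP (k \in D1 y E)) => // /set_mem [p [pp py hd]].
  apply: (@leq_trans (nat_of_bool (prime p && (p ^ E %| k)))); first by rewrite pp hd.
  apply: (term_le_sum (fun p => nat_of_bool (prime p && (p ^ E %| k)))).
  by rewrite leq0n ltnS.
rewrite exchange_big_nat /=.
apply: (@leq_trans (\sum_(0 <= p < y.+1) (N %/ 2 ^ E))); last first.
  by rewrite sum_nat_const_nat subn0.
apply: leq_sum => p _; case: (boolP (prime p)) => pp /=.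
  rewrite cnt_div ?expn_gt0 ?prime_gt0 //.
  apply: leq_div2l; first by rewrite expn_gt0.
  by case: (E) => [|E'] //; rewrite leq_exp2r // prime_gt1.
by rewrite big1.
Qed.

Lemma cnt_D2 y N : cntN (D2 y) 0 N <= \sum_(y <= j < N) N %/ (j.+1 ^ 2).
Proof.
rewrite /cntN add0n.
apply: (@leq_trans (\sum_(1 <= k < N.+1) \sum_(y <= j < N)
            nat_of_bool (j.+1 ^ 2 %| k))).
  rewrite big_nat_cond [X in _ <= X]big_nat_cond.
  apply: leq_sum => k /andP[/andP[k1 kN] _].
  case: (boolP (k \in D2 y)) => // /set_mem [n [yn hd]].
  have n0 : 0 < n by apply: leq_ltn_trans yn.
  have nk : n <= k.
    apply: leq_trans (dvdn_leq k1 hd); rewrite -{1}(expn1 n).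
    exact: leq_pexp2l.
  apply: leq_trans (@term_le_sum (fun j => nat_of_bool (j.+1 ^ 2 %| k)) y N n.-1 _).
    by rewrite (prednK n0) hd.
  lia.
rewrite exchange_big_nat /=; apply: leq_sum => j _.
by rewrite cnt_div // expn_gt0.
Qed.

Lemma cnt_cover y E N : cntN (Hs y E) 0 N <=
  cntN G3star 0 N + cntN (D1 y E) 0 N + cntN (D2 y) 0 N.
Proof.
rewrite /cntN -!big_split /= big_nat_cond [X in _ <= X]big_nat_cond.
apply: leq_sum => k /andP[/andP[k1 _] _].
case: (boolP (k \in Hs y E)) => // /set_mem hH.
case: (H_cover y E k k1 hH) => h; rewrite (mem_set h) /=; lia.
Qed.

Lemma D1_nat y N : 0 < y -> y.+1 * (N %/ 2 ^ (y + y)) * y <= N.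
Proof.
move=> y0; rewrite mulnC mulnA mulnC.
apply: leq_trans (leq_divM N (2 ^ (y + y))).
rewrite leq_mul2l; apply/orP; right.
rewrite expnD mulnC; apply: leq_mul; first exact: ltn_expl.
exact: ltnW (ltn_expl _ _).
Qed.

Section Real.
Variable R : realType.
Local Open Scope ring_scope.

Lemma squeeze (u v : nat -> R) :
 (forall e : R, 0 < e -> exists c : R, \forall n \near \oo, c - e <= u n /\ u n <= v n /\ v n <= c + e) ->
 cvgn u /\ v @ \oo --> limn u.
Proof.
move=> H.
have cu : cvgn u.
  apply/cauchy_cvgP; apply: cauchy_exP => e e0.
  have [c hc] := H (e/2) (divr_gt0 e0 (ltr0Sn _ _)).
  exists c; apply: filterS hc => n [h1 [h2 h3]] /=.
  rewrite /ball /= ltr_norml; apply/andP; split; lra.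
split => //.
apply/cvgrPdist_le => e e0.
have [c hc] := H (e/3) (divr_gt0 e0 (ltr0Sn _ _)).
have l1 : c - e/3 <= limn u.
  by apply: limr_ge => //; apply: filterS hc => n [].
have l2 : limn u <= c + e/3.
  apply: limr_le => //; apply: filterS hc => n [h1 [h2 h3]]; lra.
apply: filterS hc => n [h1 [h2 h3]].
rewrite ler_norml; apply/andP; split; lra.
Qed.

Lemma wcE A m s : window_count R A m s = (cntN A m s)%:R.
Proof. by rewrite /window_count natr_sum. Qed.

Lemma realU (X q c M s : R) : 0 <= c -> 0 < M -> 0 < s ->
  X <= q * c + M -> q * M <= s -> X / s <= c / M + M / s.
Proof.
move=> c0 M0 s0 hX hq.
have h : q * c <= c / M * s.
  have -> : q * c = (q * M) * (c / M) by field; rewrite lt0r_neq0.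
  by rewrite [c / M * s]mulrC ler_wpM2r // divr_ge0 // ltW.
rewrite ler_pdivrMr // mulrDl divfK ?lt0r_neq0 //; lra.
Qed.

Lemma D2_real y N : (0 < y)%N ->
  ((\sum_(y <= j < N) N %/ (j.+1 ^ 2))%:R : R) <= N%:R / y%:R.
Proof.
move=> y0; case: (leqP N y) => hNy.
  by rewrite big_geq // divr_ge0.
rewrite natr_sum.
apply: (@le_trans _ _ (\sum_(y <= j < N) (N%:R * ((j%:R)^-1 - (j.+1%:R)^-1)))).
  rewrite big_nat_cond [X in _ <= X]big_nat_cond.
  apply: ler_sum => j /andP[/andP[yj _] _].
  have j0 : (0 < j)%N by apply: leq_trans y0 yj.
  apply: (@le_trans _ _ (N %/ (j * j.+1))%:R).
    rewrite ler_nat; apply: leq_div2l; first by rewrite muln_gt0 j0.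
    by rewrite expnS expn1 leq_mul2r leqnSn orbT.
  have h : ((N %/ (j * j.+1))%:R * (j * j.+1)%:R <= N%:R :> R).
    by rewrite -natrM ler_nat leq_divM.
  have -> : ((j%:R)^-1 - (j.+1%:R)^-1 : R) = ((j * j.+1)%:R)^-1.
    rewrite natrM -addn1 natrD; field.
    by rewrite natr1 !pnatr_eq0; lia.
  by rewrite ler_pdivlMr // ltr0n muln_gt0 j0.
rewrite -big_distrr /=.
have -> : \sum_(y <= j < N) ((j%:R)^-1 - (j.+1%:R)^-1 : R) =
          - \sum_(y <= j < N) ((j.+1%:R)^-1 - (j%:R)^-1).
  by rewrite -sumrN; apply: eq_bigr => j _; rewrite opprB.
rewrite telescope_sumr; last exact: ltnW.
rewrite opprB mulrBr mulfV; last by rewrite pnatr_eq0 -lt0n; exact: leq_ltn_trans hNy.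
by rewrite lerBlDr lerDl.
Qed.
Lemma realL (g q c M N d1 d2 y : R) : 0 <= c -> c <= M -> 0 < M -> 0 < N -> 0 < y ->
  q*c <= g + d1 + d2 -> N <= (q+1)*M -> d1*y <= N -> d2 <= N/y ->
  c/M - M/N - 2/y <= g/N.
Proof.
move=> c0 cM M0 N0 y0 hg hN hd1 hd2.
have iN : 0 < N^-1 by rewrite invr_gt0.
have e1 : q*c/N <= g/N + d1/N + d2/N by rewrite -!mulrDl ler_wpM2r // ltW.
have e2 : c/M <= q*c/N + M/N.
  have -> : c/M = (c * N) / M / N by field; rewrite !lt0r_neq0.
  rewrite -mulrDl; apply: ler_wpM2r; first exact: ltW.
  rewrite ler_pdivrMr //.
  have := ler_wpM2l c0 hN; have : 0 <= (M - c) * M by apply: mulr_ge0; [rewrite subr_ge0 | exact: ltW]. nra.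
have e3 : d1/N <= 1/y.
  have -> : 1/y = (N/y)/N by field; rewrite !lt0r_neq0.
  apply: ler_wpM2r; first exact: ltW. by rewrite ler_pdivlMr.
have e4 : d2/N <= 1/y.
  have -> : 1/y = (N/y)/N by field; rewrite !lt0r_neq0.
  apply: ler_wpM2r; first exact: ltW. done.
have -> : 2/y = 1/y + 1/y by field; rewrite lt0r_neq0.
lra.
Qed.


Definition Mof y := ((y`!) ^ (y + y))%N.
Lemma Mof_gt0 y : (0 < Mof y)%N.
Proof. by rewrite expn_gt0 fact_gt0. Qed.
Definition cof y := cntN (Hs y (y + y)) 0 (Mof y).
Definition dof y : R := (cof y)%:R / (Mof y)%:R.

Lemma uniform_upper y s : (0 < s)%N ->
  uniform_seq R G3star s <= dof y + (Mof y)%:R / s%:R.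
Proof.
move=> s0; apply: ge_sup.
  by exists (window_count R G3star 0 s / s%:R); exists 0%N.
move=> x [m _ <-]; rewrite wcE /dof.
apply: (realU _ (s %/ Mof y)%:R).
- exact: ler0n.
- by rewrite ltr0n Mof_gt0.
- by rewrite ltr0n.
- rewrite -natrM -natrD ler_nat.
  apply: (@leq_trans (cntN (Hs y (y + y)) m s)).
    exact: (cntN_mono _ _ _ _ (G_sub_H y (y + y))).
  exact: (cntN_upper _ _ (Mof_gt0 y) (Hs_per y (y + y))).
- by rewrite -natrM ler_nat leq_divM.
Qed.

Lemma density_lower y N : (0 < y)%N -> (0 < N)%N ->
  dof y - (Mof y)%:R / N%:R - 2 / y%:R <= density_seq R G3star N.
Proof.
move=> y0 N0; rewrite /density_seq wcE /dof.
have hcov := cnt_cover y (y + y) N.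
have hlow := cntN_lower _ _ (Mof_gt0 y) (Hs_per y (y + y)) N.
have hd1 : (cntN (D1 y (y + y)) 0 N * y <= N)%N.
  apply: leq_trans (D1_nat y N y0); by rewrite leq_mul2r cnt_D1 orbT.
have hd2 : (cntN (D2 y) 0 N)%:R <= N%:R / y%:R :> R.
  apply: le_trans (D2_real y N y0); by rewrite ler_nat cnt_D2.
have hc : (cof y <= Mof y)%N := cntN_le _ _ _.
have hceil := ltn_ceil N (Mof_gt0 y).
apply: (realL _ (N %/ Mof y)%:R _ _ _ (cntN (D1 y (y + y)) 0 N)%:R
   (cntN (D2 y) 0 N)%:R).
- exact: ler0n.
- by rewrite ler_nat.
- by rewrite ltr0n Mof_gt0.
- by rewrite ltr0n.
- by rewrite ltr0n.
- rewrite -natrM -!natrD ler_nat; exact: leq_trans hlow hcov.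
- by rewrite natr1 -natrM ler_nat ltnW.
- by rewrite -natrM ler_nat.
- exact: hd2.
Qed.

Lemma dens_le_unif N : density_seq R G3star N <= uniform_seq R G3star N.
Proof.
apply: ub_le_sup; last by exists 0%N.
exists 1 => x [m _ <-]; rewrite wcE.
case: N => [|n]; first by rewrite invr0 mulr0 ler01.
by rewrite ler_pdivrMr ?ltr0n // mul1r ler_nat cntN_le.
Qed.

Lemma aux1 (e Y : R) : 0 < e -> 0 < Y -> 4 / e <= Y -> 2 / Y <= e / 2.
Proof.
move=> e0 Y0; rewrite ler_pdivrMr // => h.
rewrite ler_pdivrMr //.
have -> : e / 2 * Y = (Y * e) / 2 by field.
lra.
Qed.

Lemma aux2 (e M n : R) : 0 < e -> 0 < n -> 0 <= M -> 2 * M / e <= n -> M / n <= e / 2.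
Proof.
move=> e0 n0 M0; rewrite ler_pdivrMr // => h.
rewrite ler_pdivrMr //.
have -> : e / 2 * n = (n * e) / 2 by field.
lra.
Qed.

End Real.

Local Open Scope ring_scope.

Theorem mainTheorem2 (R : realType) :
  cvgn (density_seq R G3star) /\
  uniform_seq R G3star @ \oo --> limn (density_seq R G3star).
Proof.
apply: squeeze => e e0.
pose y := (Num.Def.archi_bound (4 / e)).+1.
have y0 : (0 < y)%N by [].
have hy : 2 / y%:R <= e / 2.
  apply: aux1; [exact: e0 | by rewrite ltr0n | ].
  apply: ltW; apply: lt_le_trans (archi_boundP _) _.
    by rewrite divr_ge0 // ltW.
  by rewrite ler_nat.
exists (dof R y).
pose N0 := (Num.Def.archi_bound (2 * (Mof y)%:R / e)).+1.
exists N0 => // n /= hn.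
have n0 : (0 < n)%N by apply: leq_trans hn.
have hM : (Mof y)%:R / n%:R <= e / 2.
  apply: aux2; [exact: e0 | by rewrite ltr0n | exact: ler0n | ].
  apply: ltW; apply: lt_le_trans (archi_boundP _) _.
    by rewrite divr_ge0 // ?mulr_ge0 // ltW.
  by rewrite ler_nat ltnW.
have l1 := density_lower R y n y0 n0.
have l2 := uniform_upper R y n n0.
have l3 := dens_le_unif R n.
split; first lra.
split => //; lra.
Qed.
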